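(* There is an absolute constant $c>0$ such that for every $n\ge1$, every $\epsilon\in(1/n,1]$, and every $\epsilon$-differentially private algorithm $M$ that takes a private edge set $E$ on a fixed vertex set $V$ with $|V|=n$ and outputs an orientation $M_E$ assigning to each unordered pair $\{u,v\}$ of distinct vertices one of its endpoints $M_E(\{u,v\})\in\{u,v\}$, there exists a graph $G=(V,E)$ with $E\neq\emptyset$ such that $\mathbb{E}\big[|\{M_E(e):e\in E\}|\big]\ge \frac{c}{\epsilon}\,\mathrm{OPT}(G)$.
   Context: $M$ is $\epsilon$-differentially private if for any two edge sets $E,E'$ on $V$ with symmetric difference of size one and any set $\mathcal{O}$ of outputs, $\Pr[M(E)\in\mathcal{O}]\le e^{\epsilon}\Pr[M(E')\in\mathcal{O}]$. The set $\{M_E(e):e\in E\}$ is a vertex cover of $G$; $\mathrm{OPT}(G)$ denotes the minimum size of a vertex cover of $G$. *)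

(* Defs.v *)
From Stdlib Require Import Reals.
From HB Require Import structures.
From mathcomp Require Import all_boot all_order all_algebra.
From mathcomp Require Import Rstruct.
Set Implicit Arguments. Unset Strict Implicit. Unset Printing Implicit Defensive.
Import Order.TTheory GRing.Theory Num.Theory.
Local Open Scope ring_scope.

(* Vertex set V = 'I_n.  An unordered pair {u,v} of distinct vertices is
   represented canonically as an ordered pair (u,v) with u < v. *)
Definition upair (n : nat) := {p : 'I_n * 'I_n | (p.1 < p.2)%N}.

Definition edgeset (n : nat) := {set upair n}.

(* An orientation assigns to each unordered pair one of its endpoints;
   encoded by a boolean: true = smaller endpoint, false = larger endpoint. *)
Definition orientation (n : nat) := {ffun upair n -> bool}.

Definition endpoint (n : nat) (e : upair n) (b : bool) : 'I_n :=
  if b then (val e).1 else (val e).2.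

Definition is_mechanism (n : nat) (M : edgeset n -> orientation n -> R) : Prop :=
  forall E : edgeset n,
    (forall o, (0 <= M E o)%R) /\ (\sum_(o : orientation n) M E o = 1)%R.

Definition prob (n : nat) (M : edgeset n -> orientation n -> R)
  (E : edgeset n) (O : {set orientation n}) : R :=
  (\sum_(o in O) M E o)%R.

Definition neighbours (n : nat) (E E' : edgeset n) : Prop :=
  #|(E :\: E') :|: (E' :\: E)| = 1%N.

Definition differentially_private (n : nat) (eps : R)
  (M : edgeset n -> orientation n -> R) : Prop :=
  forall (E E' : edgeset n), neighbours E E' ->
  forall O : {set orientation n}, (prob M E O <= exp eps * prob M E' O)%R.

Definition cover_of (n : nat) (E : edgeset n) (o : orientation n) : {set 'I_n} :=
  [set endpoint e (o e) | e in E].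

Definition expected_cover (n : nat) (M : edgeset n -> orientation n -> R)
  (E : edgeset n) : R :=
  (\sum_(o : orientation n) M E o * (#|cover_of E o|)%:R)%R.

Definition is_vertex_cover (n : nat) (E : edgeset n) (C : {set 'I_n}) : bool :=
  [forall e in E, ((val e).1 \in C) || ((val e).2 \in C)].

(* Minimum vertex cover size (setT is always a cover, of size n). *)
Definition OPT (n : nat) (E : edgeset n) : nat :=
  \big[minn/n]_(C : {set 'I_n} | is_vertex_cover E C) #|C|.

(* Main.v *)
Require Import Defs.
From Stdlib Require Import Reals.
From HB Require Import structures.
From mathcomp Require Import all_boot all_order all_algebra.
From mathcomp Require Import Rstruct.
From mathcomp Require Import zify ring lra.
Import Order.TTheory GRing.Theory Num.Theory.
Set Implicit Arguments. Unset Strict Implicit. Unset Printing Implicit Defensive.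
Local Open Scope ring_scope.

Definition incident (n : nat) (v : 'I_n) (e : upair n) : bool :=
  ((val e).1 == v) || ((val e).2 == v).
Definition other (n : nat) (v : 'I_n) (e : upair n) : 'I_n :=
  if (val e).1 == v then (val e).2 else (val e).1.

Lemma other_inj (n : nat) (v : 'I_n) (e1 e2 : upair n) :
  incident v e1 -> incident v e2 -> other v e1 = other v e2 -> e1 = e2.
Proof.
move=> i1 i2 eo; apply: val_inj.
move: i1 i2 eo; rewrite /incident /other.
case: e1 e2 => [[a1 b1] /= h1] [[a2 b2] /= h2] /=.
move: h1 h2.
case: (eqVneq a1 v) => [->|n1]; case: (eqVneq a2 v) => [->|n2] //=.
- by move=> _ _ _ _ ->.
- move=> h1 h2 _ /eqP e3 e4; subst; move: h1 h2; lia.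
- move=> h1 h2 /eqP e3 _ e4; subst; move: h1 h2; lia.
- by move=> _ _ /eqP -> /eqP -> ->.
Qed.

Lemma ep_other (n : nat) (v : 'I_n) (e : upair n) (b : bool) :
  incident v e -> endpoint e b != v -> endpoint e b = other v e.
Proof.
rewrite /incident /endpoint /other; case: e => [[a c] /= h].
case: b => /=.
  by move=> _ /negbTE ->.
case: (a =P v) => [//|_] /= /eqP ->; by rewrite eqxx.
Qed.

Lemma cover_ge (n : nat) (E : edgeset n) (o : orientation n) (v : 'I_n) :
  {in E, forall e, incident v e} ->
  (#|[set e in E | endpoint e (o e) != v]| <= #|cover_of E o|)%N.
Proof.
move=> hinc.
rewrite -(card_in_imset (f := fun e => endpoint e (o e))).
  apply: subset_leq_card; apply/subsetP => x /imsetP[e]; rewrite inE => /andP[eE _] ->.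
  by rewrite /cover_of; apply/imsetP; exists e.
move=> e1 e2; rewrite !inE => /andP[h1 n1] /andP[h2 n2] eq.
apply: (other_inj (v:=v)); rewrite ?hinc //.
by rewrite -(ep_other (hinc _ h1) n1) -(ep_other (hinc _ h2) n2).
Qed.

Lemma sum_card (n : nat) (M : edgeset n -> orientation n -> R) (E F : edgeset n) (v : 'I_n) :
  \sum_(e in F) prob M E [set o : orientation n | endpoint e (o e) != v] =
  \sum_(o : orientation n) M E o * (#|[set e in F | endpoint e (o e) != v]|)%:R.
Proof.
rewrite /prob.
under eq_bigr => e _ do rewrite big_mkcond /=.
rewrite exchange_big /=; apply: eq_bigr => o _.
rewrite -big_mkcondr /=.
rewrite (eq_bigl (fun e => e \in [set e in F | endpoint e (o e) != v])); last by move=> e; rewrite !inE.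
by rewrite sumr_const mulr_natr.
Qed.

Lemma exp_ge (n : nat) M (E : edgeset n) v : is_mechanism M ->
  {in E, forall e, incident v e} ->
  \sum_(e in E) prob M E [set o : orientation n | endpoint e (o e) != v] <= expected_cover M E.
Proof.
move=> /(_ E) [M0 _] hinc.
rewrite sum_card /expected_cover; apply: ler_sum => o _.
by apply: ler_wpM2l => //; rewrite ler_nat cover_ge.
Qed.

Lemma chain (n : nat) (eps : R) (M : edgeset n -> orientation n -> R) :
  differentially_private eps M -> forall (A : edgeset n) (O : {set orientation n}),
  prob M set0 O <= exp eps ^+ #|A| * prob M A O.
Proof.
move=> dp A O.
have [m] := ubnP #|A|; elim: m A => // m IH A hA.
have [->|/set0Pn [e eA]] := eqVneq A set0; first by rewrite cards0 expr0 mul1r.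
have hA' : (#|A :\ e| < m)%N by rewrite (cardsD1 e A) eA in hA; lia.
have := IH _ hA'.
have nb : neighbours (A :\ e) A.
  rewrite /neighbours.
  have -> : (A :\ e) :\: A :|: A :\: (A :\ e) = [set e].
    apply/setP => x; rewrite !inE.
    case: (eqVneq x e) => [->|nx] /=; first by rewrite eA.
    by case: (x \in A).
  by rewrite cards1.
have := dp _ _ nb O.
rewrite (cardsD1 e A) eA exprS => h1 h2.
apply: (le_trans h2).
rewrite [exp eps * _]mulrC -mulrA; apply: ler_wpM2l => //.
  by apply: exprn_ge0; apply/RleP; apply: Rlt_le; apply: exp_pos.

Qed.

Lemma expmono (x y : R) : x <= y -> exp x <= exp y.
Proof.
case/boolP: (x == y) => [/eqP -> //|hl] h.
apply/RleP; apply: Rlt_le; apply: exp_increasing; apply/RltP.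
by rewrite lt_neqAle hl h.
Qed.

Lemma expbound (eps : R) (j : nat) : (j%:R * eps <= 1) -> exp eps ^+ j <= 3.
Proof.
move=> h; rewrite expRX -mulr_natl.
apply: (@le_trans _ _ (exp 1)); last by have h3 := exp_le_3; apply/RleP; apply: (Rle_trans _ _ _ h3); rewrite -INRE INR_IZR_INZ ?mulr1 ?Rmult_1_r; apply: Rle_refl.
by apply: expmono; rewrite -mulr_natl.
Qed.

Lemma bigmin_leq (T : finType) (P : pred T) (F : T -> nat) m x :
  P x -> (\big[minn/m]_(i | P i) F i <= F x)%N.
Proof.
move=> Px; have : x \in index_enum T by rewrite mem_index_enum.
elim: (index_enum T) => // y r IH.
rewrite inE big_cons => /orP[/eqP <-|xr].
  by rewrite Px; exact: geq_minl.
case: (P y); [exact: leq_trans (geq_minr _ _) (IH xr) | exact: IH].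
Qed.

Lemma OPT_le1 (n : nat) (E : edgeset n) (v : 'I_n) :
  {in E, forall e, incident v e} -> (OPT E <= 1)%N.
Proof.
move=> hinc; rewrite /OPT.
have h := @bigmin_leq _ (fun C => is_vertex_cover E C) (fun C => #|C|) n [set v].
apply: leq_trans (h _) _; last by rewrite cards1.
rewrite /is_vertex_cover; apply/forallP => e; apply/implyP => eE.
by have := hinc _ eE; rewrite /incident !inE.
Qed.

Lemma cover0 (n : nat) (M : edgeset n -> orientation n -> R) :
  expected_cover M set0 = 0.
Proof.
rewrite /expected_cover big1 // => o _.
by rewrite /cover_of imset0 cards0 mulr0.
Qed.

Definition Tset (n k : nat) : edgeset n := [set e : upair n | ((val e).2 <= k)%N].
Definition Gset (n k : nat) (hk : (k.+1 <= n)%N) (i : 'I_k.+1) : edgeset n :=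
  [set e in Tset n k | incident (widen_ord hk i) e].

Lemma Tcard (n k : nat) : (k.+1 <= n)%N -> (k * k.+1 <= 4 * #|Tset n k|)%N.
Proof.
move=> hk.
set m := (k.+1 %/ 2)%N; set l := (k.+1 - m)%N.
have hkm : (k * k.+1 <= 4 * m * l)%N by rewrite /l /m; nia.
have ha : forall a : 'I_m, (a < n)%N.
  move=> a; have := ltn_ord a; rewrite /m; lia.
have hb : forall b : 'I_l, (m + b < n)%N.
  move=> b; have := ltn_ord b; rewrite /l /m; lia.
have hab : forall (a : 'I_m) (b : 'I_l), (Ordinal (ha a) < Ordinal (hb b))%N.
  move=> a b /=; have := ltn_ord a; lia.
pose f := fun p : 'I_m * 'I_l =>
  (exist (fun q : 'I_n * 'I_n => (q.1 < q.2)%N) (Ordinal (ha p.1), Ordinal (hb p.2)) (hab p.1 p.2) : upair n).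
have finj : injective f.
  move=> [a1 b1] [a2 b2] /(congr1 val) /= [e1 e2].
  by congr pair; apply: val_inj => /=; lia.
apply: leq_trans hkm _.
rewrite -mulnA leq_mul2l; apply/orP; right.
have <- : #|[set: 'I_m * 'I_l]| = (m * l)%N by rewrite cardsT card_prod !card_ord.
rewrite -(card_imset _ finj).
apply: subset_leq_card; apply/subsetP => x /imsetP [[a b] _ ->].
rewrite inE /=; have := ltn_ord b; rewrite /l /m; lia.
Qed.

Lemma Gcard (n k : nat) (hk : (k.+1 <= n)%N) (i : 'I_k.+1) : (#|Gset hk i| <= k)%N.
Proof.
set v := widen_ord hk i.
set S := [set u : 'I_n | (u <= k)%N].
have hS : (#|S| <= k.+1)%N.
  have : S \subset [set widen_ord hk j | j in [set: 'I_k.+1]].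
    apply/subsetP => u; rewrite inE => hu; apply/imsetP.
    have hu' : (u < k.+1)%N by [].
    by exists (Ordinal hu'); rewrite ?inE //; apply: val_inj.
  move/subset_leq_card => h; apply: leq_trans h _.
  by apply: leq_trans (leq_imset_card _ _) _; rewrite cardsT card_ord.
have vS : v \in S by rewrite inE /v /=; have := ltn_ord i; lia.
have hS' : (#|S :\ v| <= k)%N by move: hS; rewrite (cardsD1 v S) vS; lia.
apply: leq_trans hS'.
have hinc : {in Gset hk i, forall e, incident v e}.
  by move=> e; rewrite inE => /andP[].
rewrite -(card_in_imset (f := other v)); last first.
  by move=> e1 e2 h1 h2; apply: other_inj; apply: hinc.
apply: subset_leq_card; apply/subsetP => x /imsetP [e eG ->].
have := hinc _ eG; move: eG; rewrite !inE /incident /other.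
case: e => [[a b] /= hab] /andP[hb _].
case: (a =P v) => [ea|/eqP na].
  by rewrite /= hb andbT -ea neq_ltn hab orbT.
by move=> /= _; rewrite na /=; move: hab hb; lia.
Qed.

Lemma Bsum (n k : nat) (hk : (k.+1 <= n)%N) (o : orientation n) :
  (#|Tset n k| <= \sum_(i < k.+1)
     #|[set e in Gset hk i | endpoint e (o e) != widen_ord hk i]|)%N.
Proof.
under eq_bigr => i _ do rewrite -sum1_card big_mkcond /=.
rewrite -sum1_card.
rewrite exchange_big /= big_mkcond /=; apply: leq_sum => e _.
case: ifP => eT //.
have hx : (endpoint e (~~ o e) < k.+1)%N.
  move: eT; rewrite inE /endpoint; case: e => [[a b] /= hab]; case: (o _) => /=; lia.
set x := endpoint e (~~ o e).
rewrite (bigD1 (Ordinal hx)) //= inE.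
rewrite /Gset !inE; move: (eT); rewrite inE => ->.
have -> : widen_ord hk (Ordinal hx) = x by apply: val_inj.
have -> : incident x e.
  by rewrite /incident /x /endpoint; case: (o e) => /=; rewrite eqxx ?orbT.
suff -> : endpoint e (o e) != x by [].
rewrite /x /endpoint; case: e {eT x hx} => [[a b] /= hab]; case: (o _) => /=;
  rewrite neq_ltn hab ?orbT //.
Qed.

Theorem mainTheorem8 :
  exists c : R, (0 < c)%R /\
  forall (n : nat), (1 <= n)%N ->
  forall (eps : R), (1 / n%:R < eps)%R -> (eps <= 1)%R ->
  forall (M : edgeset n -> orientation n -> R),
    is_mechanism M -> differentially_private eps M ->
    exists E : edgeset n, E != set0 /\
      (c / eps * (OPT E)%:R <= expected_cover M E)%R.
Proof.
exists (1/24); split; first lra.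
move=> n n1 eps heps he1 M HM HDP.
have n0 : 0 < n%:R :> R by rewrite ltr0n.
have eps0 : 0 < eps.
  by apply: lt_trans heps; rewrite divr_gt0.
have hne : 1 < n%:R * eps by rewrite mulrC ltr_pdivrMl // mulr1 in heps.
have exk : exists k : nat, 1 < k.+1%:R * eps by exists n.-1; rewrite prednK.
case: (ex_minnP exk) => k hk kmin.
have k1 : (0 < k)%N.
  rewrite lt0n; apply/eqP => k0; move: hk; rewrite k0 mul1r => h; lra.
have keps : k%:R * eps <= 1.
  rewrite leNgt; apply/negP => h; have := kmin k.-1; rewrite prednK // => /(_ h); lia.
have hk1 : (k.+1 <= n)%N.
  have := kmin n.-1; rewrite prednK // => /(_ hne); lia.
pose G := Gset hk1.
pose O (e : upair n) (i : 'I_k.+1) :=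
  [set o : orientation n | endpoint e (o e) != widen_ord hk1 i].
have hinc : forall i, {in G i, forall e, incident (widen_ord hk1 i) e}.
  by move=> i e; rewrite inE => /andP[].
have bound_i : forall i,
    \sum_(e in G i) prob M set0 (O e i) <= 3 * expected_cover M (G i).
  move=> i.
  apply: (@le_trans _ _ (3 * \sum_(e in G i) prob M (G i) (O e i))); last first.
    by apply: ler_wpM2l => //; apply: exp_ge.
  rewrite mulr_sumr; apply: ler_sum => e _.
  apply: le_trans (chain HDP (G i) _) _.
  apply: ler_wpM2r.
    by rewrite /prob; apply: sumr_ge0 => o _; case: (HM (G i)).
  apply: expbound; apply: le_trans keps.
  by apply: ler_wpM2r; [exact: ltW | rewrite ler_nat Gcard].
have total : #|Tset n k|%:R <= \sum_(i < k.+1) \sum_(e in G i) prob M set0 (O e i).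
  under eq_bigr => i _ do rewrite sum_card.
  rewrite exchange_big /=.
  have [M0 M1] := HM set0.
  have -> : #|Tset n k|%:R = \sum_(o : orientation n) M set0 o * #|Tset n k|%:R :> R
    by rewrite -mulr_suml M1 mul1r.
  apply: ler_sum => o _.
  rewrite -mulr_sumr -natr_sum; apply: ler_wpM2l => //.
  by rewrite ler_nat Bsum.
have tc : k%:R * (k%:R + 1) <= 4%:R * #|Tset n k|%:R :> R.
  by rewrite natr1 -!natrM ler_nat; apply: Tcard.
case: (boolP [exists i : 'I_k.+1, 1/24/eps <= expected_cover M (G i)]).
  move=> /existsP [i hi]; exists (G i).
  have hc : 0 < 1/24/eps by rewrite !divr_gt0.
  split.
    by apply/eqP => G0; move: hi; rewrite G0 cover0; lra.
  apply: le_trans hi.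
  rewrite -[X in _ <= X]mulr1; apply: ler_wpM2l.
    exact: ltW.
  by rewrite (_ : 1 = 1%:R) // ler_nat; apply: (OPT_le1 (hinc i)).
move=> /existsPn hall.
have hsum : \sum_(i < k.+1) expected_cover M (G i) <= k.+1%:R * (1/24/eps).
  apply: (@le_trans _ _ (\sum_(i < k.+1) (1/24/eps))).
    by apply: ler_sum => i _; have := hall i; rewrite -ltNge => /ltW.
  by rewrite sumr_const card_ord mulr_natl.
have hsum2 : \sum_(i < k.+1) \sum_(e in G i) prob M set0 (O e i)
    <= 3 * \sum_(i < k.+1) expected_cover M (G i).
  by rewrite mulr_sumr; apply: ler_sum => i _; apply: bound_i.
set x := k%:R in tc keps hsum hk.
set T := #|Tset n k|%:R in tc total.
have x1 : 1 <= x by rewrite /x (_ : 1 = 1%:R) // ler_nat.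
have hT : T <= (x + 1) * (1/24/eps) * 3.
  move: hsum; rewrite /x -natr1 => hs; lra.
have hT2 : T * eps <= (x + 1) / 8.
  have -> : (x + 1) / 8 = (x + 1) * (1/24/eps) * 3 * eps.
    by field; rewrite gt_eqF.
  by apply: ler_wpM2r => //; exact: ltW.
have h3 : x * (x + 1) * eps <= (x + 1) / 2.
  have := ler_wpM2r (ltW eps0) tc; lra.
have h4 : x * eps <= 1 / 2.
  have hx : 0 < x + 1 by lra.
  nra.
move: hk; rewrite -natr1 -/x; nra.
Qed.
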